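(* Let $\varepsilon\neq0$ and let $\mathbf x:\mathbb R\to\mathbb R^3$ be a solution of the $\varepsilon$-revised system $$\dot{\mathbf x}=\mathbf x\times\mathbf m(\mathbf x)+\varepsilon[(\mathbf x\times\mathbf m(\mathbf x))\times\mathbf m(\mathbf x)].$$ Then there exist equilibrium points $\mathbf x_m,\mathbf x_M\in\mathbf E$ such that $$\lim_{t\to-\infty}\mathbf x(t)=\mathbf x_M\quad\text{and}\quad\lim_{t\to+\infty}\mathbf x(t)=\mathbf x_m .$$
   Context: Fix constants $0<a_1<a_2<a_3$ and $a,b,c\in\mathbb R$. Set $\mathbf m(\mathbf x)=(a_1x^1+a,\ a_2x^2+b,\ a_3x^3+c)$; $\times$ is the cross product. $\mathbf E=\{\mathbf x\in\mathbb R^3:\mathbf x\times\mathbf m(\mathbf x)=\mathbf 0\}$ is the set of equilibrium points of the $\varepsilon$-revised system (for $\varepsilon\ne0$). *)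

(* Defs.v *)
From Stdlib Require Import Reals.
From Coquelicot Require Import Coquelicot.
Open Scope R_scope.

Definition vec3 := (R * R * R)%type.

Definition v3 (x1 x2 x3 : R) : vec3 := (x1, x2, x3).
Definition c1 (v : vec3) : R := fst (fst v).
Definition c2 (v : vec3) : R := snd (fst v).
Definition c3 (v : vec3) : R := snd v.

Definition cross (u v : vec3) : vec3 :=
  v3 (c2 u * c3 v - c3 u * c2 v)
     (c3 u * c1 v - c1 u * c3 v)
     (c1 u * c2 v - c2 u * c1 v).

Definition vadd (u v : vec3) : vec3 := v3 (c1 u + c1 v) (c2 u + c2 v) (c3 u + c3 v).
Definition vscal (k : R) (u : vec3) : vec3 := v3 (k * c1 u) (k * c2 u) (k * c3 u).

Definition mfield (a1 a2 a3 a b c : R) (x : vec3) : vec3 :=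
  v3 (a1 * c1 x + a) (a2 * c2 x + b) (a3 * c3 x + c).

Definition revised_rhs (a1 a2 a3 a b c eps : R) (x : vec3) : vec3 :=
  let m := mfield a1 a2 a3 a b c x in
  vadd (cross x m) (vscal eps (cross (cross x m) m)).

Definition Eq_set (a1 a2 a3 a b c : R) (x : vec3) : Prop :=
  cross x (mfield a1 a2 a3 a b c x) = v3 0 0 0.

Definition is_revised_solution (a1 a2 a3 a b c eps : R) (x : R -> vec3) : Prop :=
  forall t : R, is_derive x t (revised_rhs a1 a2 a3 a b c eps (x t)).

(* Main.v *)
Require Import Defs.
From Stdlib Require Import Reals Lra Psatz Classical.
From Coquelicot Require Import Coquelicot.
Open Scope R_scope.

Definition conv (f : R -> R) (l : R) :=
  forall eps, 0 < eps -> exists T, forall t, T <= t -> Rabs (f t - l) < eps.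

Lemma conv_lim f l : conv f l <-> is_lim f p_infty l.
Proof.
rewrite <- is_lim_spec. split.
- intros H eps. destruct (H eps (cond_pos eps)) as [T HT]. exists T. intros t Ht. apply HT; lra.
- intros H eps Heps. destruct (H (mkposreal eps Heps)) as [T HT]. exists (T+1). intros t Ht. apply HT; lra.
Qed.

Lemma conv_const l : conv (fun _ => l) l.
Proof. apply conv_lim, is_lim_const. Qed.
Lemma conv_plus f g lf lg : conv f lf -> conv g lg -> conv (fun t => f t + g t) (lf + lg).
Proof. rewrite !conv_lim. apply is_lim_plus'. Qed.
Lemma conv_minus f g lf lg : conv f lf -> conv g lg -> conv (fun t => f t - g t) (lf - lg).
Proof. rewrite !conv_lim. apply is_lim_minus'. Qed.
Lemma conv_mult f g lf lg : conv f lf -> conv g lg -> conv (fun t => f t * g t) (lf * lg).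
Proof. rewrite !conv_lim. intros A B. apply (is_lim_mult f g p_infty lf lg A B). exact I. Qed.
Lemma conv_opp f lf : conv f lf -> conv (fun t => - f t) (- lf).
Proof. rewrite !conv_lim. intros A. apply (is_lim_opp f p_infty lf A). Qed.
Lemma conv_div f g lf lg : conv f lf -> conv g lg -> lg <> 0 -> conv (fun t => f t / g t) (lf / lg).
Proof. rewrite !conv_lim. intros A B C. apply (is_lim_div f g p_infty lf lg A B).
  intro E; apply C; injection E; auto. exact I. Qed.
Lemma conv_unique f l1 l2 : conv f l1 -> conv f l2 -> l1 = l2.
Proof. rewrite !conv_lim. intros A B. apply is_lim_unique in A. apply is_lim_unique in B.
  rewrite A in B. injection B; auto. Qed.
Lemma conv_ext f g l : (exists T, forall t, T <= t -> f t = g t) -> conv f l -> conv g l.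
Proof. intros [T HT] H eps Heps. destruct (H eps Heps) as [T' H']. exists (Rmax T T').
  intros t Ht. rewrite <- HT. apply H'.
  apply Rle_trans with (2 := Ht); apply Rmax_r.
  apply Rle_trans with (2 := Ht); apply Rmax_l. Qed.

Definition Bd (f : R -> R) := exists M, forall t, Rabs (f t) <= M.
Lemma Bd_const k : Bd (fun _ => k).
Proof. exists (Rabs k). intros; lra. Qed.
Lemma Bd_plus f g : Bd f -> Bd g -> Bd (fun t => f t + g t).
Proof. intros [M HM] [N HN]. exists (M+N). intros t.
  eapply Rle_trans. apply Rabs_triang. specialize (HM t); specialize (HN t); lra. Qed.
Lemma Bd_opp f : Bd f -> Bd (fun t => - f t).
Proof. intros [M HM]. exists M. intros t. rewrite Rabs_Ropp. auto. Qed.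
Lemma Bd_minus f g : Bd f -> Bd g -> Bd (fun t => f t - g t).
Proof. intros A B. apply (Bd_plus f (fun t => - g t) A (Bd_opp g B)). Qed.
Lemma Bd_mult f g : Bd f -> Bd g -> Bd (fun t => f t * g t).
Proof. intros [M HM] [N HN]. exists (M*N). intros t. rewrite Rabs_mult.
  apply Rmult_le_compat; try apply Rabs_pos; auto. Qed.

Definition LB (f : R -> R) := Bd f /\ exists L, 0 <= L /\ forall t s, Rabs (f t - f s) <= L * Rabs (t - s).
Lemma LB_const k : LB (fun _ => k).
Proof. split. apply Bd_const. exists 0. split. lra. intros. replace (k-k) with 0 by ring. rewrite Rabs_R0. lra. Qed.
Lemma LB_plus f g : LB f -> LB g -> LB (fun t => f t + g t).
Proof. intros [A [L [L0 HL]]] [B [K [K0 HK]]]. split. now apply Bd_plus. exists (L+K). split. lra. intros t s.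
  replace (f t + g t - (f s + g s)) with ((f t - f s) + (g t - g s)) by ring.
  eapply Rle_trans. apply Rabs_triang. specialize (HL t s); specialize (HK t s); lra. Qed.
Lemma LB_opp f : LB f -> LB (fun t => - f t).
Proof. intros [A [L [L0 HL]]]. split. now apply Bd_opp. exists L. split. lra. intros t s.
  replace (- f t - - f s) with (- (f t - f s)) by ring. rewrite Rabs_Ropp. auto. Qed.
Lemma LB_minus f g : LB f -> LB g -> LB (fun t => f t - g t).
Proof. intros A B. apply (LB_plus f (fun t => - g t) A (LB_opp g B)). Qed.
Lemma LB_mult f g : LB f -> LB g -> LB (fun t => f t * g t).
Proof. intros [[M HM] [L [L0 HL]]] [[N HN] [K [K0 HK]]]. split. apply Bd_mult; [exists M|exists N]; auto.
  assert (0 <= M) by (specialize (HM 0); pose proof (Rabs_pos (f 0)); lra).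
  assert (0 <= N) by (specialize (HN 0); pose proof (Rabs_pos (g 0)); lra).
  exists (M*K + N*L). split. nra. intros t s.
  replace (f t * g t - f s * g s) with (f t * (g t - g s) + g s * (f t - f s)) by ring.
  eapply Rle_trans. apply Rabs_triang. rewrite !Rabs_mult.
  assert (0 <= Rabs (t - s)) by apply Rabs_pos.
  assert (Rabs (f t) * Rabs (g t - g s) <= M * (K * Rabs (t-s))).
  { apply Rmult_le_compat; try apply Rabs_pos; auto. }
  assert (Rabs (g s) * Rabs (f t - f s) <= N * (L * Rabs (t-s))).
  { apply Rmult_le_compat; try apply Rabs_pos; auto. }
  nra. Qed.
Lemma LB_inv f c : LB f -> 0 < c -> (forall t, c <= f t) -> LB (fun t => / f t).
Proof. intros [[M HM] [L [L0 HL]]] Hc Hf. split.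
  - exists (/c). intros t. specialize (Hf t). rewrite Rabs_right.
    apply Rinv_le_contravar; lra. apply Rle_ge, Rlt_le, Rinv_0_lt_compat; lra.
  - exists (L / (c*c)). split. apply Rmult_le_pos; [lra| apply Rlt_le, Rinv_0_lt_compat; nra].
    intros t s. assert (ft := Hf t). assert (fs := Hf s).
    replace (/ f t - / f s) with ((f s - f t) / (f t * f s)) by (field; lra).
    unfold Rdiv. rewrite Rabs_mult, Rabs_inv, (Rabs_right (f t * f s)) by nra.
    rewrite <- Rabs_Ropp. replace (- (f s - f t)) with (f t - f s) by ring.
    specialize (HL t s). assert (0 <= Rabs (t-s)) by apply Rabs_pos.
    assert (c*c <= f t * f s) by nra.
    assert (/ (f t * f s) <= / (c*c)) by (apply Rinv_le_contravar; nra).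
    assert (0 <= / (f t * f s)) by (apply Rlt_le, Rinv_0_lt_compat; nra).
    assert (0 <= Rabs (f t - f s)) by apply Rabs_pos.
    apply Rle_trans with (L * Rabs (t - s) * / (c*c)).
    apply Rmult_le_compat; auto.
    right; field; nra.
Qed.
Lemma LB_div f g c : LB f -> LB g -> 0 < c -> (forall t, c <= g t) -> LB (fun t => f t / g t).
Proof. intros. unfold Rdiv. apply (LB_mult f (fun t => / g t)); auto. eapply LB_inv; eauto. Qed.
Lemma LB_Bd f : LB f -> Bd f. Proof. intros [A _]; auto. Qed.
Lemma LB_cont f : LB f -> continuity f.
Proof. intros [_ [L [L0 HL]]] t. apply continuity_pt_filterlim.
  intros P [eps HP]. exists (mkposreal (eps / (L+1)) ltac:(apply Rdiv_lt_0_compat; [apply cond_pos|lra])).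
  intros y Hy. apply HP. change (Rabs (f y - f t) < eps). change (Rabs (y - t) < eps / (L+1)) in Hy.
  pose proof (cond_pos eps). eapply Rle_lt_trans. apply HL.
  apply Rle_lt_trans with ((L+1) * Rabs (y - t)). pose proof (Rabs_pos (y-t)); nra.
  apply Rmult_lt_reg_l with (/ (L+1)). apply Rinv_0_lt_compat; lra.
  rewrite <- Rmult_assoc, Rinv_l, Rmult_1_l by lra. unfold Rdiv in Hy. lra.
Qed.

Lemma deriv_cont f t l : is_derive f t l -> continuity_pt f t.
Proof. intros H. apply continuity_pt_filterlim. apply (ex_derive_continuous f t). exists l; auto. Qed.

Lemma mvt f df : (forall t, is_derive f t (df t)) -> forall a b,
  exists c, Rmin a b <= c <= Rmax a b /\ f b - f a = df c * (b - a).
Proof. intros H a b. apply (MVT_gen f a b df). intros; auto. intros; eapply deriv_cont; eauto. Qed.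

Lemma deriv0_const f df : (forall t, is_derive f t (df t)) -> (forall t, df t = 0) -> forall t, f t = f 0.
Proof. intros H H0 t. destruct (mvt f df H 0 t) as [c [_ Hc]]. rewrite H0 in Hc. lra. Qed.

Lemma deriv_LB f df : (forall t, is_derive f t (df t)) -> Bd f -> Bd df -> LB f.
Proof. intros H A [M HM]. split; auto. exists (Rabs M). split. apply Rabs_pos.
  intros t s. destruct (mvt f df H s t) as [c [_ Hc]]. rewrite Hc, Rabs_mult.
  apply Rmult_le_compat_r. apply Rabs_pos. eapply Rle_trans. apply HM. apply RRle_abs. Qed.

Lemma deriv_noninc f df : (forall t, is_derive f t (df t)) -> (forall t, df t <= 0) ->
  forall s t, s <= t -> f t <= f s.
Proof. intros H H0 s t Hst. destruct (mvt f df H s t) as [c [_ Hc]]. specialize (H0 c). nra. Qed.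

Lemma noninc_conv f m : (forall s t, s <= t -> f t <= f s) -> (forall t, m <= f t) ->
  exists l, conv f l /\ forall t, l <= f t.
Proof. intros Hm Hb.
  destruct (completeness (fun y => exists t, y = - f t)) as [L [HL1 HL2]].
  { exists (- m). intros y [t ->]. specialize (Hb t). lra. }
  { exists (- f 0), 0. auto. }
  exists (- L). split.
  - intros eps Heps. destruct (classic (exists t, L - eps < - f t)) as [[t0 Ht0]|N].
    + exists t0. intros t Ht. assert (- f t <= L) by (apply HL1; eauto).
      specialize (Hm t0 t Ht). apply Rabs_def1; lra.
    + exfalso. assert (L <= L - eps) by (apply HL2; intros y [t ->]; apply Rnot_lt_le; intro; apply N; eauto). lra.
  - intros t. assert (- f t <= L) by (apply HL1; eauto). lra.
Qed.

Lemma nondec_conv f m : (forall s t, s <= t -> f s <= f t) -> (forall t, f t <= m) ->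
  exists l, conv f l /\ forall t, f t <= l.
Proof. intros Hm Hb. destruct (noninc_conv (fun t => - f t) (- m)) as [l [H1 H2]].
  intros s t Hst; specialize (Hm s t Hst); lra. intros t; specialize (Hb t); lra.
  exists (- l). split. apply conv_ext with (fun t => - - f t).
  exists 0; intros; ring. apply (conv_opp (fun t => - f t)); auto.
  intros t; specialize (H2 t); lra.
Qed.

Lemma ivt f a b y : continuity f -> a <= b -> Rmin (f a) (f b) <= y <= Rmax (f a) (f b) ->
  exists c, a <= c <= b /\ f c = y.
Proof. intros Hc Hab Hy. destruct (IVT_gen f a b y Hc Hy) as [c [Hc1 Hc2]].
  exists c. rewrite Rmin_left, Rmax_right in Hc1 by lra. auto. Qed.

Record prm := mkp { A1:R; A2:R; A3:R; D1:R; D2:R; D3:R }.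
Definition U1 p y1 := A1 p * y1 + D1 p.
Definition U2 p y2 := A2 p * y2 + D2 p.
Definition U3 p y3 := A3 p * y3 + D3 p.
Definition W1 p (y1 y2 y3 : R) := y2 * U3 p y3 - y3 * U2 p y2.
Definition W2 p (y1 y2 y3 : R) := y3 * U1 p y1 - y1 * U3 p y3.
Definition W3 p (y1 y2 y3 : R) := y1 * U2 p y2 - y2 * U1 p y1.
Definition Z1 p (y1 y2 y3 : R) := W2 p y1 y2 y3 * U3 p y3 - W3 p y1 y2 y3 * U2 p y2.
Definition Z2 p (y1 y2 y3 : R) := W3 p y1 y2 y3 * U1 p y1 - W1 p y1 y2 y3 * U3 p y3.
Definition Z3 p (y1 y2 y3 : R) := W1 p y1 y2 y3 * U2 p y2 - W2 p y1 y2 y3 * U1 p y1.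
Definition F1 p (s e y1 y2 y3 : R) := s * W1 p y1 y2 y3 + e * Z1 p y1 y2 y3.
Definition F2 p (s e y1 y2 y3 : R) := s * W2 p y1 y2 y3 + e * Z2 p y1 y2 y3.
Definition F3 p (s e y1 y2 y3 : R) := s * W3 p y1 y2 y3 + e * Z3 p y1 y2 y3.
Definition Qf p (y1 y2 y3 : R) := W1 p y1 y2 y3 * W1 p y1 y2 y3 + W2 p y1 y2 y3 * W2 p y1 y2 y3
  + W3 p y1 y2 y3 * W3 p y1 y2 y3.
Definition Hm p (y1 y2 y3 : R) := A1 p * y1 * y1 + 2 * D1 p * y1 + A2 p * y2 * y2 + 2 * D2 p * y2
  + A3 p * y3 * y3 + 2 * D3 p * y3.
Definition Sol p s e (x1 x2 x3 : R -> R) := forall t,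
  is_derive x1 t (F1 p s e (x1 t) (x2 t) (x3 t)) /\
  is_derive x2 t (F2 p s e (x1 t) (x2 t) (x3 t)) /\
  is_derive x3 t (F3 p s e (x1 t) (x2 t) (x3 t)).

Ltac dsub H := match type of H with is_derive ?f ?t ?d =>
  let E := fresh in assert (E : Derive (fun y : R => f y) t = d) by (apply is_derive_unique; exact H);
  rewrite E; clear E end.
Ltac unf := unfold Qf, Hm, F1, F2, F3, Z1, Z2, Z3, W1, W2, W3, U1, U2, U3.
Ltac dtac Hs t := destruct (Hs t) as [Hd1 [Hd2 Hd3]]; unf; auto_derive;
  [repeat split; try (eexists; eassumption) | dsub Hd1; dsub Hd2; dsub Hd3; unf; ring].
Ltac bd := unf; repeat (apply Bd_plus || apply Bd_minus || apply Bd_mult || apply Bd_opp || apply Bd_const || assumption).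
Ltac lbt := unf; repeat (apply LB_plus || apply LB_minus || apply LB_mult || apply LB_opp || apply LB_const || assumption).

Lemma energy p s e x1 x2 x3 : Sol p s e x1 x2 x3 ->
  forall t, Hm p (x1 t) (x2 t) (x3 t) = Hm p (x1 0) (x2 0) (x3 0).
Proof. intros Hs.
  apply (deriv0_const (fun t => Hm p (x1 t) (x2 t) (x3 t)) (fun t => 0)); auto.
  intros t. dtac Hs t.
Qed.

Lemma sq_bound A D y M : 0 < A -> A*y*y + 2*D*y <= M -> Rabs y <= 1 + (2*M + 4*D*D/A)/A.
Proof. intros HA H.
  assert (HB : y*y <= (2*M + 4*D*D/A)/A).
  { apply Rmult_le_reg_l with A; auto. field_simplify; try lra.
    apply Rmult_le_reg_l with A; auto. field_simplify; try lra.
    assert (0 <= (A*y + 2*D)^2) by apply pow2_ge_0. nra. }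
  assert (0 <= y*y) by nra.
  destruct (Rle_dec (Rabs y) 1). lra.
  assert (Rabs y * Rabs y = y * y) by (rewrite <- Rabs_mult; apply Rabs_right; nra). nra.
Qed.

Lemma low_bound A D y : 0 < A -> - (D*D/A) <= A*y*y + 2*D*y.
Proof. intros HA. assert (0 <= (A*y + D)^2) by apply pow2_ge_0.
  apply Rmult_le_reg_l with A; auto. field_simplify; lra. Qed.

Lemma bounded p s e x1 x2 x3 : 0 < A1 p -> 0 < A2 p -> 0 < A3 p -> Sol p s e x1 x2 x3 ->
  Bd x1 /\ Bd x2 /\ Bd x3.
Proof. intros H1 H2 H3 Hs. pose proof (energy p s e x1 x2 x3 Hs) as HE.
  set (h := Hm p (x1 0) (x2 0) (x3 0)) in *. unfold Hm in HE.
  repeat split.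
  - eexists. intros t. specialize (HE t). apply (sq_bound (A1 p) (D1 p) _ (h + D2 p * D2 p / A2 p + D3 p * D3 p / A3 p)); auto.
    pose proof (low_bound (A2 p) (D2 p) (x2 t) H2). pose proof (low_bound (A3 p) (D3 p) (x3 t) H3). lra.
  - eexists. intros t. specialize (HE t). apply (sq_bound (A2 p) (D2 p) _ (h + D1 p * D1 p / A1 p + D3 p * D3 p / A3 p)); auto.
    pose proof (low_bound (A1 p) (D1 p) (x1 t) H1). pose proof (low_bound (A3 p) (D3 p) (x3 t) H3). lra.
  - eexists. intros t. specialize (HE t). apply (sq_bound (A3 p) (D3 p) _ (h + D2 p * D2 p / A2 p + D1 p * D1 p / A1 p)); auto.
    pose proof (low_bound (A2 p) (D2 p) (x2 t) H2). pose proof (low_bound (A1 p) (D1 p) (x1 t) H1). lra.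
Qed.

Lemma lipschitz p s e x1 x2 x3 : 0 < A1 p -> 0 < A2 p -> 0 < A3 p -> Sol p s e x1 x2 x3 ->
  LB x1 /\ LB x2 /\ LB x3.
Proof. intros H1 H2 H3 Hs. destruct (bounded p s e x1 x2 x3 H1 H2 H3 Hs) as [B1 [B2 B3]].
  refine (conj _ (conj _ _)).
  - apply (deriv_LB x1 (fun t => F1 p s e (x1 t) (x2 t) (x3 t))); auto. intros t; apply Hs. bd.
  - apply (deriv_LB x2 (fun t => F2 p s e (x1 t) (x2 t) (x3 t))); auto. intros t; apply Hs. bd.
  - apply (deriv_LB x3 (fun t => F3 p s e (x1 t) (x2 t) (x3 t))); auto. intros t; apply Hs. bd.
Qed.

Lemma Rabs_def2b x a : Rabs x <= a -> - a <= x /\ x <= a.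
Proof. unfold Rabs; destruct (Rcase_abs x); lra. Qed.

Definition rad (x1 x2 x3 : R -> R) t := x1 t * x1 t + x2 t * x2 t + x3 t * x3 t.

Lemma rad_deriv p s e x1 x2 x3 : Sol p s e x1 x2 x3 ->
  forall t, is_derive (rad x1 x2 x3) t (-2 * e * Qf p (x1 t) (x2 t) (x3 t)).
Proof. intros Hs t. unfold rad. dtac Hs t. Qed.

Lemma Qf_nonneg p y1 y2 y3 : 0 <= Qf p y1 y2 y3.
Proof. unfold Qf. nra. Qed.

Lemma rad_conv p s e x1 x2 x3 : 0 < A1 p -> 0 < A2 p -> 0 < A3 p -> Sol p s e x1 x2 x3 ->
  exists rho, 0 <= rho /\ conv (rad x1 x2 x3) rho.
Proof. intros H1 H2 H3 Hs. destruct (bounded p s e x1 x2 x3 H1 H2 H3 Hs) as [B1 [B2 B3]].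
  assert (Br : Bd (rad x1 x2 x3)) by (unfold rad; bd). destruct Br as [M HM].
  assert (R0 : forall t, 0 <= rad x1 x2 x3 t) by (intros; unfold rad; nra).
  destruct (Rle_or_lt 0 e) as [He|He].
  - destruct (noninc_conv (rad x1 x2 x3) 0) as [l [Hl1 Hl2]]; auto.
    + apply (deriv_noninc _ _ (rad_deriv p s e x1 x2 x3 Hs)). intros t.
      pose proof (Qf_nonneg p (x1 t) (x2 t) (x3 t)). nra.
    + exists l; split; auto. specialize (Hl2 0).
      destruct (Rle_or_lt 0 l); auto. exfalso.
      destruct (Hl1 (- l)) as [T HT]. lra. specialize (HT T (Rle_refl _)). specialize (R0 T).
      apply Rabs_def2 in HT. lra.
  - destruct (nondec_conv (rad x1 x2 x3) M) as [l [Hl1 Hl2]].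
    + intros s0 t Hst. pose proof (deriv_noninc (fun t => - rad x1 x2 x3 t) (fun t => 2 * e * Qf p (x1 t) (x2 t) (x3 t))).
      assert (- rad x1 x2 x3 t <= - rad x1 x2 x3 s0); [|lra]. apply H; auto.
      intros t0. replace (2 * e * Qf p (x1 t0) (x2 t0) (x3 t0)) with (opp (-2 * e * Qf p (x1 t0) (x2 t0) (x3 t0))).
      apply (is_derive_opp (rad x1 x2 x3)). apply (rad_deriv p s e x1 x2 x3 Hs).
      match goal with |- opp ?a = ?b => change (@eq R (- a) b) end; ring.
      intros t0. pose proof (Qf_nonneg p (x1 t0) (x2 t0) (x3 t0)). nra.
    + intros t. specialize (HM t). apply Rabs_def2b in HM. lra.
    + exists l. split; auto. specialize (Hl2 0). specialize (R0 0). lra.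
Qed.

Lemma barbalat (r q : R -> R) k rho : (forall t, is_derive r t (k * q t)) -> k <> 0 ->
  (forall t, 0 <= q t) -> LB q -> conv r rho -> conv q 0.
Proof. intros Hd Hk Hq [_ [L [L0 HL]]] Hr eta Heta.
  set (tau := eta / (2 * (L+1))).
  assert (Htau : 0 < tau) by (unfold tau; apply Rdiv_lt_0_compat; lra).
  assert (Hk' : 0 < Rabs k) by (apply Rabs_pos_lt; auto).
  set (del := Rabs k * eta * tau / 4).
  assert (Hdel : 0 < del) by (unfold del; apply Rdiv_lt_0_compat; [apply Rmult_lt_0_compat; [apply Rmult_lt_0_compat|] |]; lra).
  destruct (Hr del Hdel) as [T HT]. exists T. intros t Ht.
  rewrite Rminus_0_r, Rabs_right by (apply Rle_ge; auto).
  apply Rnot_le_lt. intros Hge.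
  destruct (mvt r (fun t => k * q t) Hd t (t + tau)) as [c [Hc Hmv]].
  rewrite Rmin_left, Rmax_right in Hc by lra.
  assert (Hqc : eta / 2 <= q c).
  { specialize (HL t c). apply Rabs_def2b in HL.
    rewrite (Rabs_left1 (t - c)) in HL by lra.
    assert (L * (- (t - c)) <= L * tau) by (apply Rmult_le_compat_l; lra).
    assert (L * tau <= eta / 2).
    { unfold tau. apply Rmult_le_reg_l with (2 * (L+1)). lra. field_simplify; nra. }
    lra. }
  assert (A1' := HT t Ht). assert (A2' := HT (t + tau) ltac:(lra)).
  assert (Rabs (r (t + tau) - r t) < 2 * del).
  { replace (r (t + tau) - r t) with ((r (t+tau) - rho) - (r t - rho)) by ring.
    eapply Rle_lt_trans. apply Rabs_triang. rewrite Rabs_Ropp. lra. }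
  rewrite Hmv in H. replace (k * q c * (t + tau - t)) with (k * (q c * tau)) in H by ring.
  rewrite Rabs_mult, (Rabs_right (q c * tau)) in H by nra.
  unfold del in H. assert (0 <= (Rabs k * tau) * (q c - eta/2)) by (apply Rmult_le_pos; nra). lra.
Qed.

Lemma Q_conv p s e x1 x2 x3 : 0 < A1 p -> 0 < A2 p -> 0 < A3 p -> e <> 0 -> Sol p s e x1 x2 x3 ->
  conv (fun t => Qf p (x1 t) (x2 t) (x3 t)) 0.
Proof. intros H1 H2 H3 He Hs. destruct (rad_conv p s e x1 x2 x3 H1 H2 H3 Hs) as [rho [_ Hr]].
  destruct (lipschitz p s e x1 x2 x3 H1 H2 H3 Hs) as [L1 [L2 L3]].
  apply (barbalat (rad x1 x2 x3) _ (-2 * e) rho).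
  intros t. apply (rad_deriv p s e x1 x2 x3 Hs). lra.
  intros; apply Qf_nonneg. lbt. auto.
Qed.

Lemma Rabs_def2b' x a : Rabs x <= a -> - a <= x /\ x <= a.
Proof. unfold Rabs; destruct (Rcase_abs x); lra. Qed.

Lemma conv_eq f l l' : conv f l -> l = l' -> conv f l'.
Proof. intros H ->; auto. Qed.

Lemma conv_sparse (lam G : R -> R) : continuity lam -> Bd lam ->
  (forall mu, (forall T, exists t, T <= t /\ lam t = mu) -> G mu = 0) ->
  (forall z eta, 0 < eta -> exists mu, z < mu < z + eta /\ G mu <> 0) ->
  exists l, conv lam l.
Proof. intros Hc [M HM] HZ HD.
  set (Sp := fun mu => exists T, forall t, T <= t -> mu < lam t).
  destruct (completeness Sp) as [l [Hl1 Hl2]].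
  { exists M. intros mu [T HT]. specialize (HT T (Rle_refl _)). specialize (HM T).
    apply Rabs_def2b' in HM. lra. }
  { exists (- M - 1), 0. intros t _. specialize (HM t). apply Rabs_def2b' in HM. lra. }
  exists l. intros eta Heta.
  assert (Hlow : exists T, forall t, T <= t -> l - eta < lam t).
  { destruct (classic (exists mu, Sp mu /\ l - eta < mu)) as [[mu [[T HT] Hmu]]|N].
    - exists T. intros t Ht. specialize (HT t Ht). lra.
    - exfalso. assert (l <= l - eta); [|lra]. apply Hl2. intros mu Hmu.
      apply Rnot_lt_le. intro; apply N; eauto. }
  destruct (HD l eta Heta) as [mu [Hmu HG]].
  assert (HnS : ~ Sp mu) by (intro HS; specialize (Hl1 mu HS); lra).
  assert (Hnz : ~ (forall T, exists t, T <= t /\ lam t = mu)) by (intro H; apply HG, HZ, H).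
  apply not_all_ex_not in Hnz. destruct Hnz as [T1 HT1].
  assert (HT1' : forall t, T1 <= t -> lam t <> mu) by (intros t Ht E; apply HT1; eauto).
  assert (Hup : forall t, T1 <= t -> lam t < mu).
  { intros t0 Ht0. destruct (Rtotal_order (lam t0) mu) as [H|[H|H]]; auto.
    - exfalso; apply (HT1' t0 Ht0 H).
    - exfalso. apply HnS. exists t0. intros t Ht.
      destruct (Rtotal_order (lam t) mu) as [H'|[H'|H']]; auto.
      + destruct (ivt lam t0 t mu Hc Ht) as [c [Hc1 Hc2]].
        rewrite Rmin_right, Rmax_left by lra. lra.
        exfalso; apply (HT1' c); auto; lra.
      + exfalso; apply (HT1' t); auto; lra. }
  destruct Hlow as [T2 HT2]. exists (Rmax T1 T2). intros t Ht.
  assert (T1 <= t) by (eapply Rle_trans; [apply Rmax_l|apply Ht]).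
  assert (T2 <= t) by (eapply Rle_trans; [apply Rmax_r|apply Ht]).
  specialize (Hup t H). specialize (HT2 t H0). apply Rabs_def1; lra.
Qed.

Lemma conv_comp_lin (x e lam : R -> R) A D l : conv lam l -> conv e 0 ->
  (forall t, e t = A * x t + D - lam t * x t) -> A <> l -> conv x (- D / (A - l)).
Proof. intros Hl He Hd Hne.
  assert (Hev : exists T, forall t, T <= t -> A - lam t <> 0).
  { destruct (Hl (Rabs (A - l))) as [T HT]. apply Rabs_pos_lt; lra.
    exists T. intros t Ht E. specialize (HT t Ht). replace (lam t - l) with (A - l) in HT by lra. lra. }
  apply conv_ext with (fun t => (e t - D) / (A - lam t)).
  { destruct Hev as [T HT]. exists T. intros t Ht. rewrite Hd. field. auto. }
  replace (- D / (A - l)) with ((0 - D) / (A - l)) by (field; lra).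
  apply conv_div. apply conv_minus; auto. apply conv_const. apply conv_minus; auto. apply conv_const. lra.
Qed.

Lemma sq_conv f L : continuity f -> conv (fun t => f t * f t) L -> exists y, conv f y.
Proof. intros Hc Hf.
  assert (HL : 0 <= L).
  { destruct (Rle_or_lt 0 L); auto. destruct (Hf (- L)) as [T HT]; [lra|].
    specialize (HT T (Rle_refl _)). apply Rabs_def2 in HT. nra. }
  destruct (Req_dec L 0) as [E|NE].
  - subst. exists 0. intros eps Heps. destruct (Hf (eps*eps)) as [T HT]. nra.
    exists T. intros t Ht. specialize (HT t Ht). rewrite Rminus_0_r in *.
    apply Rabs_def2 in HT. destruct HT as [HT _].
    assert (Rabs (f t) * Rabs (f t) < eps * eps) by (rewrite <- Rabs_mult, Rabs_right; nra).
    pose proof (Rabs_pos (f t)). nra.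
  - assert (HLp : 0 < L) by lra.
    destruct (Hf (L/2)) as [T HT]; [lra|].
    assert (Hnz : forall t, T <= t -> f t <> 0).
    { intros t Ht E. specialize (HT t Ht). rewrite E in HT. apply Rabs_def2 in HT. lra. }
    assert (Hsign : forall g, continuity g -> (forall t, T <= t -> g t <> 0) -> 0 < g T -> forall t, T <= t -> 0 < g t).
    { intros g Hg Hn Hp t Ht. destruct (Rtotal_order 0 (g t)) as [H|[H|H]]; auto.
      - exfalso; apply (Hn t Ht); auto.
      - destruct (ivt g T t 0 Hg Ht) as [c [Hc1 Hc2]].
        rewrite Rmin_right, Rmax_left by lra. lra. exfalso; apply (Hn c); [lra|auto]. }
    assert (Hpos : forall g, (forall t, T <= t -> 0 < g t) -> conv (fun t => g t * g t) L -> conv g (sqrt L)).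
    { intros g Hg Hgg eps Heps. pose proof (sqrt_lt_R0 L HLp) as Hs. pose proof (sqrt_sqrt L (Rlt_le _ _ HLp)) as Hss.
      destruct (Hgg (eps * sqrt L)) as [T' HT']. nra. exists (Rmax T T'). intros t Ht.
      assert (T <= t) by (eapply Rle_trans; [apply Rmax_l|apply Ht]).
      assert (T' <= t) by (eapply Rle_trans; [apply Rmax_r|apply Ht]).
      specialize (Hg t H). specialize (HT' t H0).
      replace (g t * g t - L) with ((g t - sqrt L) * (g t + sqrt L)) in HT' by nra.
      rewrite Rabs_mult, (Rabs_right (g t + sqrt L)) in HT' by lra.
      assert (Rabs (g t - sqrt L) * sqrt L <= Rabs (g t - sqrt L) * (g t + sqrt L)).
      { apply Rmult_le_compat_l. apply Rabs_pos. lra. }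
      nra. }
    destruct (Rtotal_order 0 (f T)) as [H|[H|H]].
    + exists (sqrt L). apply Hpos. apply Hsign; auto. auto.
    + exfalso; apply (Hnz T (Rle_refl _)); auto.
    + exists (- sqrt L). apply conv_ext with (fun t => - - f t). exists 0; intros; ring.
      apply conv_opp. apply Hpos.
      * apply (Hsign (fun t => - f t)). exact (continuity_opp f Hc).
        intros t Ht E. apply (Hnz t Ht). lra. lra.
      * apply conv_ext with (fun t => f t * f t); auto. exists 0; intros; ring.
Qed.

Definition Pm p (rho mu : R) :=
  rho * ((A1 p-mu)*(A1 p-mu)*((A2 p-mu)*(A2 p-mu))*((A3 p-mu)*(A3 p-mu)))
  - (D1 p*D1 p*((A2 p-mu)*(A2 p-mu)*((A3 p-mu)*(A3 p-mu))) + D2 p*D2 p*((A1 p-mu)*(A1 p-mu)*((A3 p-mu)*(A3 p-mu)))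
     + D3 p*D3 p*((A1 p-mu)*(A1 p-mu)*((A2 p-mu)*(A2 p-mu)))).

Lemma fd p rho z h :
  let P := Pm p rho in
  P (z+h) - 6 * P (z+2*h) + 15 * P (z+3*h) - 20 * P (z+4*h) + 15 * P (z+5*h) - 6 * P (z+6*h) + P (z+7*h)
  = 720 * rho * (h*h*h*h*h*h).
Proof. intros P. unfold P, Pm. ring. Qed.

Lemma Pm_dense p rho : rho <> 0 -> forall z eta, 0 < eta -> exists mu, z < mu < z + eta /\ Pm p rho mu <> 0.
Proof. intros Hr z eta He. set (h := eta / 8). assert (0 < h) by (unfold h; lra).
  apply NNPP. intro N.
  assert (Hk : forall k, 1 <= k <= 7 -> Pm p rho (z + k * h) = 0).
  { intros k Hk. apply NNPP. intro N'. apply N. exists (z + k*h). split; auto. unfold h in *; nra. }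
  pose proof (fd p rho z h) as F. simpl in F.
  rewrite <- (Rmult_1_l h) in F at 1.
  rewrite (Hk 1), (Hk 2), (Hk 3), (Hk 4), (Hk 5), (Hk 6), (Hk 7) in F by lra.
  assert (0 < h*h*h*h*h*h) by (repeat apply Rmult_lt_0_compat; lra).
  assert (rho * (h*h*h*h*h*h) = 0) by lra. apply Rmult_integral in H1. destruct H1; lra.
Qed.

Lemma LB_max f c : LB f -> LB (fun t => Rmax (f t) c).
Proof. intros [[M HM] [L [L0 HL]]]. split.
  - exists (Rmax M (Rabs c)). intros t. unfold Rmax at 1. destruct (Rle_dec (f t) c).
    apply Rmax_r. eapply Rle_trans. apply HM. apply Rmax_l.
  - exists L. split; auto. intros t s. eapply Rle_trans; [|apply HL].
    unfold Rmax. destruct (Rle_dec (f t) c), (Rle_dec (f s) c);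
    unfold Rabs; repeat destruct Rcase_abs; lra.
Qed.

Lemma lagrange p y1 y2 y3 : let r := y1*y1 + y2*y2 + y3*y3 in 0 < r ->
  let P := y1 * U1 p y1 + y2 * U2 p y2 + y3 * U3 p y3 in
  let l := P / r in
  ((U1 p y1 - l * y1) * (U1 p y1 - l * y1) + (U2 p y2 - l * y2) * (U2 p y2 - l * y2)
   + (U3 p y3 - l * y3) * (U3 p y3 - l * y3)) * r = Qf p y1 y2 y3.
Proof. intros r Hr P l. unfold l, P, r in *. unf. field. lra. Qed.

Definition Rm x1 x2 x3 rho t := Rmax (rad x1 x2 x3 t) (rho/2).
Definition Pd p (x1 x2 x3 : R -> R) t := x1 t * U1 p (x1 t) + x2 t * U2 p (x2 t) + x3 t * U3 p (x3 t).
Definition lam p x1 x2 x3 rho t := Pd p x1 x2 x3 t / Rm x1 x2 x3 rho t.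
Definition ee1 p x1 x2 x3 rho t := U1 p (x1 t) - lam p x1 x2 x3 rho t * x1 t.
Definition ee2 p x1 x2 x3 rho t := U2 p (x2 t) - lam p x1 x2 x3 rho t * x2 t.
Definition ee3 p x1 x2 x3 rho t := U3 p (x3 t) - lam p x1 x2 x3 rho t * x3 t.

Ltac ctac := repeat (eassumption || apply conv_const || apply conv_plus || apply conv_minus || apply conv_mult || apply conv_opp).

Lemma pos_case p x1 x2 x3 rho : A1 p < A2 p -> A2 p < A3 p ->
  LB x1 -> LB x2 -> LB x3 -> 0 < rho -> conv (rad x1 x2 x3) rho ->
  conv (fun t => Qf p (x1 t) (x2 t) (x3 t)) 0 ->
  exists y1 y2 y3, conv x1 y1 /\ conv x2 y2 /\ conv x3 y3.
Proof. intros H12 H23 L1 L2 L3 Hrho Hr HQ.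
  destruct (Hr (rho/2)) as [T0 HT0]; [lra|].
  assert (Hr0 : forall t, T0 <= t -> rho/2 < rad x1 x2 x3 t).
  { intros t Ht. specialize (HT0 t Ht). apply Rabs_def2 in HT0. lra. }
  assert (HRm : forall t, T0 <= t -> Rm x1 x2 x3 rho t = rad x1 x2 x3 t).
  { intros t Ht. unfold Rm. apply Rmax_left. specialize (Hr0 t Ht). lra. }
  assert (Lrad : LB (rad x1 x2 x3)) by (unfold rad; lbt).
  assert (Llam : LB (lam p x1 x2 x3 rho)).
  { unfold lam. apply (LB_div _ _ (rho/2)). unfold Pd; lbt. apply LB_max; auto. lra.
    intros; unfold Rm; apply Rmax_r. }
  assert (Hsum : forall t, T0 <= t ->
    (ee1 p x1 x2 x3 rho t * ee1 p x1 x2 x3 rho t + ee2 p x1 x2 x3 rho t * ee2 p x1 x2 x3 rho t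
     + ee3 p x1 x2 x3 rho t * ee3 p x1 x2 x3 rho t) * rad x1 x2 x3 t = Qf p (x1 t) (x2 t) (x3 t)).
  { intros t Ht. unfold ee1, ee2, ee3, lam. rewrite HRm by auto. unfold Pd, rad.
    apply lagrange. specialize (Hr0 t Ht). unfold rad in Hr0. lra. }
  assert (Hee : forall (ei : R -> R), (forall t, T0 <= t -> ei t * ei t * rad x1 x2 x3 t <= Qf p (x1 t) (x2 t) (x3 t)) -> conv ei 0).
  { intros ei Hei eps Heps. destruct (HQ (eps*eps*(rho/2))) as [T HT].
    apply Rmult_lt_0_compat; nra.
    exists (Rmax T T0). intros t Ht.
    assert (T <= t) by (eapply Rle_trans; [apply Rmax_l|apply Ht]).
    assert (T0 <= t) by (eapply Rle_trans; [apply Rmax_r|apply Ht]).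
    specialize (HT t H). specialize (Hei t H0). specialize (Hr0 t H0).
    rewrite Rminus_0_r in *. pose proof (Qf_nonneg p (x1 t) (x2 t) (x3 t)).
    rewrite Rabs_right in HT by lra.
    assert (ei t * ei t * (rho/2) <= ei t * ei t * rad x1 x2 x3 t) by (apply Rmult_le_compat_l; nra).
    assert (ei t * ei t < eps * eps) by nra.
    assert (Rabs (ei t) * Rabs (ei t) < eps * eps) by (rewrite <- Rabs_mult, Rabs_right; nra).
    pose proof (Rabs_pos (ei t)). nra. }
  assert (E1 : conv (ee1 p x1 x2 x3 rho) 0).
  { apply Hee. intros t Ht. rewrite <- (Hsum t Ht). specialize (Hr0 t Ht). nra. }
  assert (E2 : conv (ee2 p x1 x2 x3 rho) 0).
  { apply Hee. intros t Ht. rewrite <- (Hsum t Ht). specialize (Hr0 t Ht). nra. }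
  assert (E3 : conv (ee3 p x1 x2 x3 rho) 0).
  { apply Hee. intros t Ht. rewrite <- (Hsum t Ht). specialize (Hr0 t Ht). nra. }
  destruct (conv_sparse (lam p x1 x2 x3 rho) (Pm p rho)) as [l Hl].
  - apply LB_cont; auto.
  - apply LB_Bd; auto.
  - intros mu Hmu.
    set (q1 := (A2 p-mu)*(A2 p-mu)*((A3 p-mu)*(A3 p-mu))).
    set (q2 := (A1 p-mu)*(A1 p-mu)*((A3 p-mu)*(A3 p-mu))).
    set (q3 := (A1 p-mu)*(A1 p-mu)*((A2 p-mu)*(A2 p-mu))).
    set (pi := (A1 p-mu)*(A1 p-mu)*q1).
    assert (Hc : conv (fun t => pi * (rho - rad x1 x2 x3 t)
       + q1 * (ee1 p x1 x2 x3 rho t * ee1 p x1 x2 x3 rho t - 2 * ee1 p x1 x2 x3 rho t * D1 p)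
       + q2 * (ee2 p x1 x2 x3 rho t * ee2 p x1 x2 x3 rho t - 2 * ee2 p x1 x2 x3 rho t * D2 p)
       + q3 * (ee3 p x1 x2 x3 rho t * ee3 p x1 x2 x3 rho t - 2 * ee3 p x1 x2 x3 rho t * D3 p)) 0).
    { eapply conv_eq. ctac. ring. }
    apply NNPP. intro Hne.
    destruct (Hc (Rabs (Pm p rho mu))) as [T HT]. apply Rabs_pos_lt; auto.
    destruct (Hmu (Rmax T T0)) as [t [Ht Hlt]].
    assert (T <= t) by (eapply Rle_trans; [apply Rmax_l|apply Ht]).
    assert (T0 <= t) by (eapply Rle_trans; [apply Rmax_r|apply Ht]).
    specialize (HT t H).
    assert (Pm p rho mu = pi * (rho - rad x1 x2 x3 t)
       + q1 * (ee1 p x1 x2 x3 rho t * ee1 p x1 x2 x3 rho t - 2 * ee1 p x1 x2 x3 rho t * D1 p)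
       + q2 * (ee2 p x1 x2 x3 rho t * ee2 p x1 x2 x3 rho t - 2 * ee2 p x1 x2 x3 rho t * D2 p)
       + q3 * (ee3 p x1 x2 x3 rho t * ee3 p x1 x2 x3 rho t - 2 * ee3 p x1 x2 x3 rho t * D3 p)).
    { unfold ee1, ee2, ee3. rewrite Hlt. unfold pi, q1, q2, q3, Pm, rad, U1, U2, U3. ring. }
    rewrite <- H1, Rminus_0_r in HT. lra.
  - apply Pm_dense. lra.
  - assert (C1 : A1 p <> l -> conv x1 (- D1 p / (A1 p - l))).
    { intros N. apply (conv_comp_lin x1 (ee1 p x1 x2 x3 rho) (lam p x1 x2 x3 rho)); auto. }
    assert (C2 : A2 p <> l -> conv x2 (- D2 p / (A2 p - l))).
    { intros N. apply (conv_comp_lin x2 (ee2 p x1 x2 x3 rho) (lam p x1 x2 x3 rho)); auto. }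
    assert (C3 : A3 p <> l -> conv x3 (- D3 p / (A3 p - l))).
    { intros N. apply (conv_comp_lin x3 (ee3 p x1 x2 x3 rho) (lam p x1 x2 x3 rho)); auto. }
    destruct (Req_dec (A1 p) l) as [Ea|Na]; [|destruct (Req_dec (A2 p) l) as [Eb|Nb];
      [|destruct (Req_dec (A3 p) l) as [Ec|Nc]]].
    + assert (K2 := C2 ltac:(intro; lra)). assert (K3 := C3 ltac:(intro; lra)).
      destruct (sq_conv x1 (rho - (- D2 p / (A2 p - l)) * (- D2 p / (A2 p - l)) - (- D3 p / (A3 p - l)) * (- D3 p / (A3 p - l)))) as [y1 K1].
      apply LB_cont; auto.
      apply conv_ext with (fun t => rad x1 x2 x3 t - x2 t * x2 t - x3 t * x3 t).
      exists 0; intros; unfold rad; ring. ctac.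
      do 3 eexists; repeat split; eassumption.
    + assert (K1 := C1 ltac:(intro; lra)). assert (K3 := C3 ltac:(intro; lra)).
      destruct (sq_conv x2 (rho - (- D1 p / (A1 p - l)) * (- D1 p / (A1 p - l)) - (- D3 p / (A3 p - l)) * (- D3 p / (A3 p - l)))) as [y2 K2].
      apply LB_cont; auto.
      apply conv_ext with (fun t => rad x1 x2 x3 t - x1 t * x1 t - x3 t * x3 t).
      exists 0; intros; unfold rad; ring. ctac.
      do 3 eexists; repeat split; eassumption.
    + assert (K1 := C1 ltac:(intro; lra)). assert (K2 := C2 ltac:(intro; lra)).
      destruct (sq_conv x3 (rho - (- D1 p / (A1 p - l)) * (- D1 p / (A1 p - l)) - (- D2 p / (A2 p - l)) * (- D2 p / (A2 p - l)))) as [y3 K3].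
      apply LB_cont; auto.
      apply conv_ext with (fun t => rad x1 x2 x3 t - x1 t * x1 t - x2 t * x2 t).
      exists 0; intros; unfold rad; ring. ctac.
      do 3 eexists; repeat split; eassumption.
    + do 3 eexists; repeat split; eauto.
Qed.

Lemma rad0_conv x1 x2 x3 : conv (rad x1 x2 x3) 0 -> conv x1 0 /\ conv x2 0 /\ conv x3 0.
Proof. intros H.
  assert (G : forall (f : R -> R), (forall t, f t * f t <= rad x1 x2 x3 t) -> conv f 0).
  { intros f Hf eps Heps. destruct (H (eps*eps)) as [T HT]. nra. exists T. intros t Ht.
    specialize (HT t Ht). specialize (Hf t). rewrite Rminus_0_r in *.
    apply Rabs_def2 in HT. destruct HT as [HT _].
    assert (Rabs (f t) * Rabs (f t) < eps * eps) by (rewrite <- Rabs_mult, Rabs_right; nra).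
    pose proof (Rabs_pos (f t)). nra. }
  unfold rad in G. repeat split; apply G; intros; nra.
Qed.

Lemma fwd p s e x1 x2 x3 : 0 < A1 p -> A1 p < A2 p -> A2 p < A3 p -> e <> 0 -> Sol p s e x1 x2 x3 ->
  exists y1 y2 y3, conv x1 y1 /\ conv x2 y2 /\ conv x3 y3 /\
    W1 p y1 y2 y3 = 0 /\ W2 p y1 y2 y3 = 0 /\ W3 p y1 y2 y3 = 0.
Proof. intros H1 H12 H23 He Hs.
  assert (H2 : 0 < A2 p) by lra. assert (H3 : 0 < A3 p) by lra.
  destruct (rad_conv p s e x1 x2 x3 H1 H2 H3 Hs) as [rho [Hr0 Hr]].
  pose proof (Q_conv p s e x1 x2 x3 H1 H2 H3 He Hs) as HQ.
  destruct (lipschitz p s e x1 x2 x3 H1 H2 H3 Hs) as [L1 [L2 L3]].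
  assert (Hy : exists y1 y2 y3, conv x1 y1 /\ conv x2 y2 /\ conv x3 y3).
  { destruct (Req_dec rho 0) as [E|N].
    - subst. destruct (rad0_conv x1 x2 x3 Hr) as [K1 [K2 K3]]. exists 0, 0, 0; auto.
    - apply (pos_case p x1 x2 x3 rho); auto. lra. }
  destruct Hy as [y1 [y2 [y3 [K1 [K2 K3]]]]].
  assert (HQ' : conv (fun t => Qf p (x1 t) (x2 t) (x3 t)) (Qf p y1 y2 y3)).
  { unf. ctac. }
  pose proof (conv_unique _ _ _ HQ HQ') as E. unfold Qf in E.
  exists y1, y2, y3. repeat split; auto; nra.
Qed.

Lemma deriv_fst {V W : NormedModule R_AbsRing} (f : R -> V * W) t l :
  is_derive f t l -> is_derive (fun s => fst (f s)) t (fst l).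
Proof.
intros H. unfold is_derive in *.
apply (filterdiff_comp f (fun p : V * W => fst p) _ (fun p => fst p) H).
apply filterdiff_linear, is_linear_fst.
Qed.
Lemma deriv_snd {V W : NormedModule R_AbsRing} (f : R -> V * W) t l :
  is_derive f t l -> is_derive (fun s => snd (f s)) t (snd l).
Proof.
intros H. unfold is_derive in *.
apply (filterdiff_comp f (fun p : V * W => snd p) _ (fun p => snd p) H).
apply filterdiff_linear, is_linear_snd.
Qed.

Lemma conv_filterlim (x : R -> vec3) y1 y2 y3 :
  conv (fun t => fst (fst (x t))) y1 -> conv (fun t => snd (fst (x t))) y2 -> conv (fun t => snd (x t)) y3 ->
  filterlim x (Rbar_locally p_infty) (locally (y1, y2, y3)).
Proof. intros K1 K2 K3 P [eps HP].
  destruct (K1 eps (cond_pos eps)) as [T1 HT1].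
  destruct (K2 eps (cond_pos eps)) as [T2 HT2].
  destruct (K3 eps (cond_pos eps)) as [T3 HT3].
  exists (Rmax T1 (Rmax T2 T3)). intros t Ht. apply HP.
  assert (T1 <= t) by (eapply Rle_trans; [apply Rmax_l|left; apply Ht]).
  assert (T2 <= t) by (eapply Rle_trans; [eapply Rle_trans; [apply Rmax_l|apply Rmax_r]|left; apply Ht]).
  assert (T3 <= t) by (eapply Rle_trans; [eapply Rle_trans; [apply Rmax_r|apply Rmax_r]|left; apply Ht]).
  specialize (HT1 t H). specialize (HT2 t H0). specialize (HT3 t H1).
  destruct (x t) as [[u1 u2] u3]. simpl in *.
  split; [split|]; auto.
Qed.

Lemma conv_filterlim_m (x : R -> vec3) y1 y2 y3 :
  conv (fun t => fst (fst (x (-t)))) y1 -> conv (fun t => snd (fst (x (-t)))) y2 -> conv (fun t => snd (x (-t))) y3 ->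
  filterlim x (Rbar_locally m_infty) (locally (y1, y2, y3)).
Proof. intros K1 K2 K3 P [eps HP].
  destruct (K1 eps (cond_pos eps)) as [T1 HT1].
  destruct (K2 eps (cond_pos eps)) as [T2 HT2].
  destruct (K3 eps (cond_pos eps)) as [T3 HT3].
  exists (- Rmax T1 (Rmax T2 T3)). intros t Ht. apply HP.
  assert (HM := Rmax_l T1 (Rmax T2 T3)). assert (HM' := Rmax_r T1 (Rmax T2 T3)).
  assert (HM2 := Rmax_l T2 T3). assert (HM3 := Rmax_r T2 T3).
  assert (H : T1 <= -t) by lra. assert (H0 : T2 <= -t) by lra. assert (H1 : T3 <= -t) by lra.
  specialize (HT1 _ H). specialize (HT2 _ H0). specialize (HT3 _ H1).
  rewrite Ropp_involutive in *.
  destruct (x t) as [[u1 u2] u3]. simpl in *.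
  split; [split|]; auto.
Qed.

Lemma rhs_comp a1 a2 a3 a b c eps (y : vec3) :
  let p := mkp a1 a2 a3 a b c in
  let v := revised_rhs a1 a2 a3 a b c eps y in
  F1 p 1 eps (fst (fst y)) (snd (fst y)) (snd y) = fst (fst v) /\
  F2 p 1 eps (fst (fst y)) (snd (fst y)) (snd y) = snd (fst v) /\
  F3 p 1 eps (fst (fst y)) (snd (fst y)) (snd y) = snd v.
Proof. destruct y as [[u1 u2] u3]. unfold revised_rhs, vadd, vscal, cross, mfield, v3, Defs.c1, Defs.c2, Defs.c3.
  simpl. unf. simpl. repeat split; ring. Qed.

Lemma sol_of (a1 a2 a3 a b c eps : R) (x : R -> vec3) :
  is_revised_solution a1 a2 a3 a b c eps x ->
  Sol (mkp a1 a2 a3 a b c) 1 eps (fun t => fst (fst (x t))) (fun t => snd (fst (x t))) (fun t => snd (x t)).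
Proof. intros H t. specialize (H t).
  pose proof (deriv_fst _ _ _ H) as H1. pose proof (deriv_snd _ _ _ H) as H3.
  pose proof (deriv_fst _ _ _ H1) as H11. pose proof (deriv_snd _ _ _ H1) as H12.
  destruct (rhs_comp a1 a2 a3 a b c eps (x t)) as [E1 [E2 E3]].
  rewrite E1, E2, E3. exact (conj H11 (conj H12 H3)).
Qed.

Lemma sol_rev p s e x1 x2 x3 : Sol p s e x1 x2 x3 ->
  Sol p (-s) (-e) (fun t => x1 (-t)) (fun t => x2 (-t)) (fun t => x3 (-t)).
Proof. intros Hs t. destruct (Hs (-t)) as [Hd1 [Hd2 Hd3]].
  refine (conj _ (conj _ _)); auto_derive;
  try (repeat split; eexists; eassumption);
  first [dsub Hd1 | dsub Hd2 | dsub Hd3]; unf; ring.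
Qed.

Theorem theorem5p2 (a1 a2 a3 a b c eps : R) (x : R -> vec3) :
  0 < a1 -> a1 < a2 -> a2 < a3 -> eps <> 0 ->
  is_revised_solution a1 a2 a3 a b c eps x ->
  exists xm xM : vec3,
    Eq_set a1 a2 a3 a b c xm /\ Eq_set a1 a2 a3 a b c xM /\
    filterlim x (Rbar_locally m_infty) (locally xM) /\
    filterlim x (Rbar_locally p_infty) (locally xm).
Proof. intros H1 H12 H23 He Hx.
  pose proof (sol_of a1 a2 a3 a b c eps x Hx) as Hs.
  destruct (fwd (mkp a1 a2 a3 a b c) _ _ _ _ _ H1 H12 H23 He Hs) as [y1 [y2 [y3 [K1 [K2 [K3 [W1e [W2e W3e]]]]]]]].
  pose proof (sol_rev _ _ _ _ _ _ Hs) as Hs'.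
  assert (He2 : - eps <> 0) by (intro; apply He; lra).
  destruct (fwd (mkp a1 a2 a3 a b c) _ _ _ _ _ H1 H12 H23 He2 Hs') as [z1 [z2 [z3 [J1 [J2 [J3 [V1e [V2e V3e]]]]]]]].
  exists (y1, y2, y3), (z1, z2, z3). split; [|split; [|split]].
  - unfold Eq_set, cross, mfield, v3, Defs.c1, Defs.c2, Defs.c3. simpl.
    unfold W1, W2, W3, U1, U2, U3 in *; simpl in *. f_equal; [f_equal|]; lra.
  - unfold Eq_set, cross, mfield, v3, Defs.c1, Defs.c2, Defs.c3. simpl.
    unfold W1, W2, W3, U1, U2, U3 in *; simpl in *. f_equal; [f_equal|]; lra.
  - apply conv_filterlim_m; auto.
  - apply conv_filterlim; auto.
Qed.
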